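(* Let $p>2$ be prime and let $C$ be a $\mathbb{Z}_p\mathbb{Z}_{p^2}$-linear code of type $(\alpha,\beta;\gamma,\delta;\kappa)$ and length $n=\alpha+p\beta$. Then $\ker(C)\in\{\gamma+\delta,\gamma+\delta+1,\ldots,\gamma+2\delta\}$.
   Context: A $\mathbb{Z}_p\mathbb{Z}_{p^2}$-additive code $\mathcal{C}$ is a subgroup of $\mathbb{Z}_p^\alpha\times\mathbb{Z}_{p^2}^\beta$; as a group $\mathcal{C}\cong\mathbb{Z}_p^\gamma\times\mathbb{Z}_{p^2}^\delta$, and if $\kappa$ is the $\mathbb{Z}_p$-dimension of the projection onto the first $\alpha$ coordinates of the subcode of codewords of order dividing $p$, $\mathcal{C}$ has type $(\alpha,\beta;\gamma,\delta;\kappa)$. The Gray map is $\phi(\theta)=\theta''(1,\ldots,1)+\theta'(0,1,\ldots,p-1)$ for $\theta=\theta''p+\theta'\in\mathbb{Z}_{p^2}$, $\theta',\theta''\in\{0,\ldots,p-1\}$, and $\Phi(\mathbf{x},\mathbf{y})=(\mathbf{x},\phi(y_1),\ldots,\phi(y_\beta))$. A $\mathbb{Z}_p\mathbb{Z}_{p^2}$-linear code of that type is $C=\Phi(\mathcal{C})$. $K(C)=\{\mathbf{x}\in\mathbb{Z}_p^n\mid C+\mathbf{x}=C\}$ and $\ker(C)=\dim_{\mathbb{Z}_p}K(C)$. *)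

(* Defs.v *)
From HB Require Import structures.
From mathcomp Require Import all_boot all_order all_algebra.
Set Implicit Arguments. Unset Strict Implicit. Unset Printing Implicit Defensive.
Import GRing.Theory.
Local Open Scope ring_scope.

Definition amb (p a b : nat) := ('rV['F_p]_a * 'rV['Z_(p ^ 2)]_b)%type.

Definition is_additive_code (p a b : nat) (C : {set amb p a b}) : Prop :=
  0 \in C /\ (forall x y, x \in C -> y \in C -> x - y \in C).

(* C has type (alpha, beta; gamma, delta; kappa):
   C is isomorphic as a group to Z_p^gamma x Z_{p^2}^delta, and kappa is the
   Z_p-dimension of the projection onto the first alpha coordinates of the
   subcode of codewords of order dividing p (a Z_p-subspace of size p^kappa). *)
Definition has_type (p a b : nat) (C : {set amb p a b}) (g d k : nat) : Prop :=
  (exists f : ({ffun 'I_g -> 'F_p} * {ffun 'I_d -> 'Z_(p ^ 2)})%type -> amb p a b,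
      [/\ {morph f : u v / u + v >-> u + v}, injective f & f @: setT = C])
  /\ #|[set c.1 | c in [set c in C | c *+ p == 0]]| = (p ^ k)%N.

Definition gray (p : nat) (t : 'Z_(p ^ 2)) : 'rV['F_p]_p :=
  \row_(j < p) (((t %/ p)%N)%:R + ((t %% p)%N)%:R * (j : nat)%:R).

Definition Phi (p a b : nat) (c : amb p a b) : 'rV['F_p]_(a + b * p) :=
  row_mx c.1 (mxvec (\matrix_(i < b, j < p) gray (c.2 0 i) 0 j)).

Definition kernel (p n : nat) (C : {set 'rV['F_p]_n}) : {set 'rV['F_p]_n} :=
  [set x | [set c + x | c in C] == C].

Definition ker_dim (p n : nat) (C : {set 'rV['F_p]_n}) : nat :=
  \dim (<< enum (kernel C) >>%VS).

(* Main.v *)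
Require Import Defs.
From mathcomp Require Import all_boot all_order all_algebra.
From mathcomp Require Import all_field.
Import GRing.Theory.
Local Open Scope ring_scope.

Section Helpers.
Variable p : nat.
Hypothesis hp : prime p.

Lemma p_gt0' : (0 < p)%N. Proof. exact: prime_gt0. Qed.
Lemma p_gt1' : (1 < p)%N. Proof. exact: prime_gt1. Qed.
Lemma p2_gt1' : (1 < p ^ 2)%N.
Proof. by rewrite -mulnn (leq_trans p_gt1') // leq_pmulr // p_gt0'. Qed.

Lemma Zval_lt (t : 'Z_(p ^ 2)) : (t < p ^ 2)%N.
Proof. by case: t => t Ht /=; rewrite Zp_cast ?p2_gt1' in Ht. Qed.

Lemma Fp_modE m n : m = n %[mod p] -> (m%:R : 'F_p) = n%:R.
Proof. by move=> h; rewrite -(Fp_nat_mod hp) h (Fp_nat_mod hp). Qed.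

Lemma Zval_add (s t : 'Z_(p ^ 2)) : nat_of_ord (s + t) = ((nat_of_ord s + nat_of_ord t) %% p ^ 2)%N.
Proof. by rewrite -[s]natr_Zp -[t]natr_Zp -natrD val_Zp_nat ?p2_gt1' // !natr_Zp. Qed.

Lemma gray_inj : injective (@gray p).
Proof.
move=> s t /rowP H.
have H0 := H (Ordinal p_gt0'); have H1 := H (Ordinal p_gt1').
rewrite !mxE /= in H0 H1.
rewrite !mulr0 !addr0 in H0.
rewrite H0 in H1; move/addrI: H1; rewrite !mulr1 => H1.
move: H0 H1 => /(congr1 val) /= H0 /(congr1 val) /= H1.
rewrite !(val_Fp_nat hp) in H0 H1.
have lt s' : ((s' : 'Z_(p ^ 2)) %/ p < p)%N.
  by rewrite ltn_divLR ?p_gt0' // mulnn Zval_lt.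
rewrite (modn_small (lt s)) (modn_small (lt t)) in H0; rewrite !modn_mod in H1.
by apply: val_inj; rewrite /= (divn_eq s p) (divn_eq t p) H0 H1.
Qed.

Lemma Phi_inj a b : injective (@Phi p a b).
Proof.
move=> [x y] [x' y'] /eq_row_mx [/= -> /(can_inj mxvecK) H]; congr pair.
apply/rowP=> i.
apply: gray_inj; apply/rowP => j.
by have := congr1 (fun M : 'M['F_p]_(b, p) => M i j) H; rewrite !mxE.
Qed.

Lemma gray_add (s t : 'Z_(p ^ 2)) : s *+ p = 0 -> gray (s + t) = gray s + gray t.
Proof.
move=> hs.
have ds : (p %| s)%N.
  have := congr1 val hs; rewrite Zp_mulrn /=; move: (nat_of_ord s) => k.
  rewrite Zp_cast ?p2_gt1' // => /eqP.
  by rewrite -/(dvdn _ _) -mulnn dvdn_pmul2r ?p_gt0'.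
move/dvdnP: ds => [a ha].
apply/rowP=> j; rewrite !mxE Zval_add ha.
rewrite mulnK ?p_gt0' // modnMl.
set u := (a * p + t)%N.
have E1 : ((u %% p ^ 2) %% p = t %% p)%N.
  by rewrite modn_dvdm ?modnMDl // dvdn_exp // p_gt0'.
have E2 : (u %/ p ^ 2 * p + (u %% p ^ 2) %/ p = a + t %/ p)%N.
  rewrite -divnMDl ?p_gt0' // -mulnA mulnn -divn_eq /u divnMDl ?p_gt0' //.
have E3 : (((u %% p ^ 2) %/ p)%:R : 'F_p) = (a + t %/ p)%:R.
  by rewrite -E2; apply: Fp_modE; rewrite modnMDl.
by rewrite E1 E3 natrD mul0r addr0 !addrA.
Qed.

Lemma pair_mulrn (U V : zmodType) (x : U * V) n : x *+ n = (x.1 *+ n, x.2 *+ n).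
Proof.
elim: n => [|n IH]; first by case: x.
by rewrite !mulrS IH.
Qed.

Lemma Phi_add a b (c c0 : amb p a b) : c0 *+ p = 0 -> Phi (c + c0) = Phi c + Phi c0.
Proof.
move=> h.
have h2 i : c0.2 0 i *+ p = 0.
  by rewrite -mulmxnE; move: h; rewrite pair_mulrn => -[_ ->]; rewrite mxE.
rewrite /Phi add_row_mx -linearD /=; congr row_mx; congr mxvec.
apply/matrixP=> i j.
have := congr1 (fun M : 'rV['F_p]_p => M 0 j) (@gray_add (c0.2 0 i) (c.2 0 i) (h2 i)).
rewrite !mxE /= => E; rewrite [(nat_of_ord (c.2 0%R i) + _)%N]addnC E.
by rewrite [in RHS]addrC.
Qed.

End Helpers.

Theorem lemma12 (p : nat) (hp : prime p) (hp2 : (2 < p)%N)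
  (alpha beta gamma delta kappa : nat) (C : {set amb p alpha beta}) :
  is_additive_code C ->
  has_type C gamma delta kappa ->
  (gamma + delta <= ker_dim [set Phi c | c in C] <= gamma + 2 * delta)%N.
Proof.
move=> [C0 CB] [[f [fD finj fim]] _].
set D := [set Phi c | c in C].
set K := kernel D.
have f0 : f 0 = 0 by apply/(addrI (f 0)); rewrite -fD !addr0.
have fMn x n : f (x *+ n) = f x *+ n.
  by elim: n => [|n IH]; rewrite ?mulr0n ?f0 // !mulrS fD IH.
have Phi0 : Phi (0 : amb p alpha beta) = 0.
  apply/(addrI (Phi (0 : amb p alpha beta))).
  by rewrite -Phi_add ?mul0rn // !addr0.
have Kadd x y : x \in K -> y \in K -> x + y \in K.
  rewrite !inE => /eqP Hx /eqP Hy; apply/eqP.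
  transitivity [set c + y | c in [set c + x | c in D]]; last by rewrite Hx Hy.
  apply/setP => z; apply/imsetP/imsetP => [[c Hc ->]|[c' /imsetP [c Hc ->] ->]].
    by exists (c + x); [apply/imsetP; exists c | rewrite addrA].
  by exists c => //; rewrite addrA.
have K0 : 0 \in K.
  rewrite inE; apply/eqP/setP => y; apply/imsetP/idP => [[c Hc ->]|Hy].
    by rewrite addr0.
  by exists y; rewrite ?addr0.
have KMn x m : x \in K -> x *+ m \in K.
  by move=> Hx; elim: m => [|m IH]; rewrite ?mulr0n // mulrS Kadd.
have KZ (k : 'F_p) x : x \in K -> k *: x \in K.
  by move=> Hx; rewrite -[k]natr_Zp scaler_nat KMn.
have KsubD x : x \in K -> x \in D.
  rewrite inE => /eqP H; rewrite -H; apply/imsetP; exists 0; last by rewrite add0r.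
  by apply/imsetP; exists 0.
have torsK c0 : c0 \in C -> c0 *+ p = 0 -> Phi c0 \in K.
  move=> Hc0 Ht.
  have tr : #|[set c + Phi c0 | c in D]| = #|D|.
    by apply: card_imset; exact: addIr.
  rewrite inE eqEcard tr leqnn andbT.
  apply/subsetP => _ /imsetP [_ /imsetP [c1 Hc1 ->] ->].
  rewrite -Phi_add //; apply/imsetP; exists (c1 + c0) => //.
  by have := CB c1 (0 - c0) Hc1 (CB 0 c0 C0 Hc0); rewrite sub0r opprK.
set V := (<< enum K >>)%VS.
have VsubK v : v \in V -> v \in K.
  move=> Hv; rewrite (@coord_span _ _ _ (in_tuple (enum K)) v Hv).
  apply: (big_ind (fun x => x \in K)) => // i _.
  by apply: KZ; rewrite -mem_enum; apply: mem_nth; exact: ltn_ord.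
have KsubV x : x \in K -> x \in V by move=> Hx; apply: memv_span; rewrite mem_enum.
have cardV : #|V| = (p ^ \dim V)%N by rewrite card_vspace card_Fp.
rewrite /ker_dim -/V; apply/andP; split.
  rewrite -(leq_exp2l _ _ (prime_gt1 hp)) -cardV.
  pose emb (z : ({ffun 'I_gamma -> 'F_p} * {ffun 'I_delta -> 'F_p})%type) :=
    (z.1, [ffun i => ((((z.2 i : nat) * p)%N)%:R : 'Z_(p ^ 2))]).
  have embT z : emb z *+ p = 0.
    rewrite pair_mulrn; congr pair; apply/ffunP => i; rewrite ffunMnE !ffunE /=.
      by rewrite -mulr_natr pchar_Fp_0 ?mulr0.
    by rewrite -mulrnA -mulnA mulnn mulnC mulrnA pchar_Zp ?p2_gt1' // mul0rn.
  have embI : injective emb.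
    move=> [a e] [a' e'] [-> /ffunP H]; congr pair; apply/ffunP=> i.
    have := H i; rewrite !ffunE => /(congr1 val) /=.
    have lt (z : 'F_p) : ((z : nat) * p < p ^ 2)%N.
      by rewrite -mulnn ltn_pmul2r ?p_gt0' //; case: z => z Hz /=; rewrite Fp_cast in Hz.
    rewrite !val_Zp_nat ?p2_gt1' // !modn_small ?lt //.
    by move/eqP; rewrite eqn_pmul2r ?p_gt0' // => /eqP /val_inj.
  pose h z := Phi (f (emb z)).
  have hI : injective h by move=> z z' /(@Phi_inj p hp _ _) /finj /embI.
  have cardT : #|h @: setT| = (p ^ (gamma + delta))%N.
    by rewrite card_imset // cardsT card_prod !card_ffun !card_ord Fp_cast // expnD.
  rewrite -cardT; apply: subset_leq_card; apply/subsetP => _ /imsetP [z _ ->].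
  apply: KsubV; apply: torsK; last by rewrite -fMn embT f0.
  by rewrite -fim; apply: imset_f.
rewrite -(leq_exp2l _ _ (prime_gt1 hp)) -cardV.
apply: (@leq_trans #|K|).
  by apply: subset_leq_card; apply/subsetP => v; exact: VsubK.
apply: (@leq_trans #|D|).
  by apply: subset_leq_card; apply/subsetP => v; exact: KsubD.
apply: (leq_trans (leq_imset_card _ _)).
rewrite -fim card_imset // cardsT card_prod !card_ffun !card_ord Fp_cast // Zp_cast ?p2_gt1' //.
by rewrite expnD expnM.
Qed.
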